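(* Let $\varepsilon,\delta\geq 0$ and let $\mathcal{M},\mathcal{N}$ be CTMCs with $\mathcal{M}\sim_{\varepsilon,\delta}\mathcal{N}$. Then there are CTMCs $\mathcal{M}'$ and $\mathcal{N}'$ with the same graph structure such that $\mathcal{M}\sim_{\varepsilon,0}\mathcal{M}'$, $\mathcal{M}'\sim_{0,\delta}\mathcal{N}'$, and $\mathcal{N}'\sim\mathcal{N}$.
   Context: A CTMC is a tuple $(S,P,E,s_{init},L)$ with $S$ a finite nonempty set of states, $P\colon S\to\mathrm{Distr}(S)$ a transition probability function (self-loops allowed; $P(s,A)=\sum_{a\in A}P(s,a)$), $E\colon S\to\mathbb{R}_{>0}$ an exit rate function, $s_{init}\in S$ an initial state and $L\colon S\to 2^{AP}$ a labeling. Two CTMCs have the same graph structure if they have the same state set, initial state, labeling, and the same pairs of states connected by transitions of positive probability. For a relation $R\subseteq S\times S$ and $A\subseteq S$, $R(A)=\{t\mid\exists s\in A:(s,t)\in R\}$. For $\varepsilon,\delta\geq0$, a reflexive symmetric relation $R$ on the states of a CTMC is an $(\varepsilon,\delta)$-bisimulation if for all $(s,s')\in R$: $L(s)=L(s')$, $|\ln E(s)-\ln E(s')|\leq\delta$, and $P(s,A)\leq P(s',R(A))+\varepsilon$ for all sets of states $A$; $s\sim_{\varepsilon,\delta}s'$ if some $(\varepsilon,\delta)$-bisimulation contains $(s,s')$. A strong bisimulation is an equivalence $R$ with $L(s)=L(s')$, $E(s)=E(s')$ and $P(s,C)=P(s',C)$ for every equivalence class $C$ whenever $(s,s')\in R$;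 $s\sim s'$ if some strong bisimulation contains $(s,s')$. For CTMCs $\mathcal{M}_1,\mathcal{M}_2$, the direct sum $\mathcal{M}_1\oplus\mathcal{M}_2$ is their disjoint union; $\mathcal{M}_1\sim_{\varepsilon,\delta}\mathcal{M}_2$ (resp. $\mathcal{M}_1\sim\mathcal{M}_2$) means that the initial states of $\mathcal{M}_1$ and $\mathcal{M}_2$ satisfy $\sim_{\varepsilon,\delta}$ (resp. $\sim$) in $\mathcal{M}_1\oplus\mathcal{M}_2$. *)

(* Defs.v *)
From HB Require Import structures.
From mathcomp Require Import all_boot all_order all_algebra.
From mathcomp Require Import boolp classical_sets reals exp.
Set Implicit Arguments. Unset Strict Implicit. Unset Printing Implicit Defensive.
Import Order.TTheory GRing.Theory Num.Theory.
Local Open Scope ring_scope.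

Record ctmc (R : realType) (AP : Type) (S : finType) := Ctmc {
  ctP : S -> S -> R;
  ctE : S -> R;
  ctinit : S;
  ctL : S -> set AP;
  ctP_ge0 : forall s t, 0 <= ctP s t;
  ctP_sum1 : forall s, \sum_(t : S) ctP s t = 1;
  ctE_gt0 : forall s, 0 < ctE s
}.

Definition Pset (R : realType) (S : finType) (P : S -> S -> R) (s : S) (A : {set S}) : R :=
  \sum_(t in A) P s t.

Definition rel_image (S : finType) (Rl : rel S) (A : {set S}) : {set S} :=
  [set t | [exists s in A, Rl s t]].

Definition is_ed_bisim (R : realType) (AP : Type) (S : finType)
    (P : S -> S -> R) (E : S -> R) (L : S -> set AP) (eps delta : R) (Rl : rel S) : Prop :=
  reflexive Rl /\ symmetric Rl /\
  forall s s', Rl s s' ->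
    [/\ L s = L s',
        `|ln (E s) - ln (E s')| <= delta
      & forall A : {set S}, Pset P s A <= Pset P s' (rel_image Rl A) + eps].

Definition is_strong_bisim (R : realType) (AP : Type) (S : finType)
    (P : S -> S -> R) (E : S -> R) (L : S -> set AP) (Rl : rel S) : Prop :=
  equivalence_rel Rl /\
  forall s s', Rl s s' ->
    [/\ L s = L s', E s = E s'
      & forall u : S, Pset P s [set t | Rl u t] = Pset P s' [set t | Rl u t]].

Section Sum.
Variables (R : realType) (AP : Type) (S1 S2 : finType).
Variables (M1 : ctmc R AP S1) (M2 : ctmc R AP S2).

Definition sumP (x y : (S1 + S2)%type) : R :=
  match x, y with
  | inl s, inl t => ctP M1 s t
  | inr s, inr t => ctP M2 s t
  | _, _ => 0
  end.
Definition sumE (x : (S1 + S2)%type) : R :=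
  match x with inl s => ctE M1 s | inr s => ctE M2 s end.
Definition sumL (x : (S1 + S2)%type) : set AP :=
  match x with inl s => ctL M1 s | inr s => ctL M2 s end.
End Sum.

Definition ed_bisimilar (R : realType) (AP : Type) (S1 S2 : finType)
    (eps delta : R) (M1 : ctmc R AP S1) (M2 : ctmc R AP S2) : Prop :=
  exists Rl : rel (S1 + S2)%type,
    is_ed_bisim (sumP M1 M2) (sumE M1 M2) (sumL M1 M2) eps delta Rl /\
    Rl (inl (ctinit M1)) (inr (ctinit M2)).

Definition strong_bisimilar (R : realType) (AP : Type) (S1 S2 : finType)
    (M1 : ctmc R AP S1) (M2 : ctmc R AP S2) : Prop :=
  exists Rl : rel (S1 + S2)%type,
    is_strong_bisim (sumP M1 M2) (sumE M1 M2) (sumL M1 M2) Rl /\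
    Rl (inl (ctinit M1)) (inr (ctinit M2)).

(* same graph structure (same state set is enforced by the common type S) *)
Definition same_graph (R : realType) (AP : Type) (S : finType) (M N : ctmc R AP S) : Prop :=
  [/\ ctinit M = ctinit N, ctL M = ctL N
    & forall s t, (0 < ctP M s t) <-> (0 < ctP N s t)].

(* Main.v *)
Require Import Defs.
From HB Require Import structures.
From mathcomp Require Import all_boot all_order all_algebra.
From mathcomp Require Import boolp classical_sets reals exp.
From mathcomp Require Import lra zify ring.
From mathcomp Require Import fintype finset.
Import Order.TTheory GRing.Theory Num.Theory.
Local Open Scope ring_scope.

Section Hall.
Variable R : realType.

Lemma ler_sum_sub (I : finType) (P Q : pred I) (F : I -> R) :
  (forall i, Q i -> 0 <= F i) -> (forall i, P i -> Q i) ->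
  \sum_(i | P i) F i <= \sum_(i | Q i) F i.
Proof.
move=> F0 PQ; rewrite [X in _ <= X]big_mkcond [X in X <= _]big_mkcond /=.
apply: ler_sum => i _; case: (boolP (P i)) => Pi; first by rewrite (PQ _ Pi).
by case: ifP => // Qi; apply: F0.
Qed.

Lemma exists_min (T : finType) (P : pred T) (f : T -> R) :
  (exists x, P x) -> exists x, P x /\ forall y, P y -> f x <= f y.
Proof.
case=> x0 Px0; case: (@arg_minP _ _ T x0 P f Px0) => i Pi Hi.
by exists i; split.
Qed.

Lemma sum_delta (T : finType) (P : pred T) (x0 : T) (t : R) :
  \sum_(x | P x) (if x == x0 then t else 0) = if P x0 then t else 0.
Proof.
rewrite -big_mkcondr /=.
case: ifP => Px0.
  rewrite (big_pred1 x0) // => x /=; case: eqP => [->|]; by rewrite ?Px0 ?andbF.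
rewrite big_pred0 // => x /=; case: eqP => [->|]; by rewrite ?Px0 ?andbF.
Qed.

Lemma sum_deltab (T : finType) (x0 : T) (b : bool) (t : R) :
  \sum_x (if (x == x0) && b then t else 0) = if b then t else 0.
Proof.
case: b; last by rewrite big1 // => x _; rewrite andbF.
rewrite (eq_bigr (fun x => if x == x0 then t else 0)); first exact: (@sum_delta _ xpredT x0 t).
by move=> x _; rewrite andbT.
Qed.

Lemma sum_shift (T : finType) (P : pred T) (f : T -> R) (x0 : T) (t : R) :
  \sum_(x | P x) (if x == x0 then f x - t else f x) =
  \sum_(x | P x) f x - (if P x0 then t else 0).
Proof.
rewrite -sum_delta -sumrB; apply: eq_bigr => x _.
by case: eqP => _; rewrite ?subr0.
Qed.

Variables (X Y : finType) (r : X -> Y -> bool).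

Definition NB (A : {set X}) : {set Y} := [set y | [exists x in A, r x y]].

Lemma NBU (A B : {set X}) y : (y \in NB (A :|: B)) = (y \in NB A) || (y \in NB B).
Proof.
rewrite !inE; apply/existsP/orP.
  by case=> x /andP[]; rewrite inE => /orP[] xA rxy; [left|right];
     apply/existsP; exists x; rewrite xA.
by case=> /existsP[x /andP[xA rxy]]; exists x; rewrite inE xA ?orbT.
Qed.

Lemma NB_sub (A B : {set X}) : A \subset B -> NB A \subset NB B.
Proof.
move/subsetP=> sAB; apply/subsetP => y; rewrite !inE => /existsP[x /andP[xA rxy]].
by apply/existsP; exists x; rewrite sAB.
Qed.

Arguments NB_sub [A B].

Lemma NB0 : NB set0 = set0.
Proof. by apply/setP => y; rewrite !inE; apply/existsP; case=> x; rewrite inE. Qed.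

Definition hall_ok (D : {set X}) (mu : X -> R) (nu : Y -> R) :=
  [/\ forall x, 0 <= mu x, forall y, 0 <= nu y
    & forall A : {set X}, A \subset D -> \sum_(x in A) mu x <= \sum_(y in NB A) nu y].

Definition hall_sol (D : {set X}) (mu : X -> R) (nu : Y -> R) (pi : X -> Y -> R) :=
  [/\ forall x y, 0 <= pi x y, forall x y, ~~ ((x \in D) && r x y) -> pi x y = 0,
      forall x, x \in D -> \sum_y pi x y = mu x & forall y, \sum_x pi x y <= nu y].

Definition meas (D : {set X}) (mu : X -> R) (nu : Y -> R) :=
  (#|D| + #|[set x in D | mu x != 0%R]| + #|[set y | nu y != 0%R]|)%N.

Lemma tight_split (D : {set X}) (mu : X -> R) (nu : Y -> R) (A : {set X}) :
  (forall D' mu' nu', (meas D' mu' nu' < meas D mu nu)%N -> hall_ok D' mu' nu' ->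
     exists pi, hall_sol D' mu' nu' pi) ->
  hall_ok D mu nu -> A \subset D -> A != set0 -> A != D ->
  \sum_(x in A) mu x = \sum_(y in NB A) nu y -> exists pi, hall_sol D mu nu pi.
Proof.
move=> IH [mu0 nu0 HD] sAD nA0 nAD tight.
pose nu1 y := if y \in NB A then nu y else 0.
pose nu2 y := if y \in NB A then 0 else nu y.
have nu10 y : 0 <= nu1 y by rewrite /nu1; case: ifP.
have nu20 y : 0 <= nu2 y by rewrite /nu2; case: ifP.
have supp1 : (#|[set y | nu1 y != 0%R]| <= #|[set y | nu y != 0%R]|)%N.
  by apply: subset_leq_card; apply/subsetP => y; rewrite !inE /nu1; case: ifP => //; rewrite eqxx.
have supp2 : (#|[set y | nu2 y != 0%R]| <= #|[set y | nu y != 0%R]|)%N.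
  by apply: subset_leq_card; apply/subsetP => y; rewrite !inE /nu2; case: ifP => //; rewrite eqxx.
have [pi1 [p10 p1s p1r p1c]] : exists pi, hall_sol A mu nu1 pi.
  apply: IH; last first.
    split=> // B sBA; rewrite [X in _ <= X](eq_bigr nu).
      by apply: HD; apply: subset_trans sAD.
    by move=> y yB; rewrite /nu1 (subsetP (NB_sub sBA)).
  rewrite /meas -!addnA; apply: (@leq_ltn_trans (#|A| + (#|[set x in D | mu x != 0%R]| + #|[set y | nu y != 0%R]|))).
    rewrite leq_add2l; apply: leq_add => //; apply: subset_leq_card.
    by apply/subsetP => x; rewrite !inE => /andP[/(subsetP sAD) -> ->].
  rewrite ltn_add2r; apply: proper_card; by rewrite properEneq nAD sAD.
have [pi2 [p20 p2s p2r p2c]] : exists pi, hall_sol (D :\: A) mu nu2 pi.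
  apply: IH; last first.
    split=> // B sBDA.
    have dAB : [disjoint A & B].
      by rewrite -setI_eq0; apply/eqP/setP => x; rewrite !inE;
         case xA: (x \in A) => //=; apply/negP => /(subsetP sBDA); rewrite !inE xA.
    have sABD : A :|: B \subset D.
      by rewrite subUset sAD (subset_trans sBDA) // subsetDl.
    have H1 := HD _ sABD.
    have HU : \sum_(x in A :|: B) mu x = \sum_(x in A) mu x + \sum_(x in B) mu x.
      by rewrite -bigU //; apply: eq_bigl => x; rewrite !inE.
    rewrite HU in H1.
    rewrite (bigID (fun y => y \in NB A)) /= in H1.
    have E1 : \sum_(i in NB (A :|: B) | i \in NB A) nu i = \sum_(i in NB A) nu i.
      by apply: eq_bigl => y; rewrite NBU; case: (y \in NB A); rewrite ?andbF.
    rewrite E1 in H1.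
    have -> : \sum_(y in NB B) nu2 y =
              \sum_(i in NB (A :|: B) | i \notin NB A) nu i.
      rewrite big_mkcond [RHS]big_mkcond; apply: eq_bigr => y _.
      rewrite NBU /nu2; case: (y \in NB A); case: (y \in NB B) => //=.
    lra.
  rewrite /meas -!addnA; apply: (@leq_ltn_trans (#|D :\: A| + (#|[set x in D | mu x != 0%R]| + #|[set y | nu y != 0%R]|))).
    rewrite leq_add2l; apply: leq_add => //; apply: subset_leq_card.
    by apply/subsetP => x; rewrite !inE => /andP[/andP[_ ->] ->].
  rewrite ltn_add2r; apply: proper_card; rewrite properE subsetDl /=.
  case/set0Pn: nA0 => a aA; apply/subsetPn; exists a; first by rewrite (subsetP sAD).
  by rewrite !inE aA.
exists (fun x y => pi1 x y + pi2 x y); split.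
- by move=> x y; rewrite addr_ge0.
- move=> x y H; rewrite p1s ?p2s ?addr0 //; apply: contra H => /andP[xA rxy];
    rewrite rxy andbT; first [by rewrite (subsetP sAD) | by move: xA; rewrite inE => /andP[]].
- move=> x xD; rewrite big_split /=; case: (boolP (x \in A)) => xA.
    by rewrite p1r // big1 ?addr0 // => y _; apply: p2s; rewrite !inE xA.
  rewrite p2r; last by rewrite inE xA xD.
  by rewrite big1 ?add0r // => y _; apply: p1s; rewrite (negbTE xA).
- move=> y; rewrite big_split /=; apply: le_trans (lerD (p1c y) (p2c y)) _.
  by rewrite /nu1 /nu2; case: ifP; rewrite ?addr0 ?add0r.
Qed.

Lemma lt3a (a b c a' b' c' : nat) : (a' <= a -> b' < b -> c' <= c -> a' + b' + c' < a + b + c)%N.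
Proof. lia. Qed.
Lemma lt3b (a b c a' b' c' : nat) : (a' <= a -> b' <= b -> c' < c -> a' + b' + c' < a + b + c)%N.
Proof. lia. Qed.
Lemma le3 (a b c a' b' c' : nat) : (a' <= a -> b' <= b -> c' <= c -> a' + b' + c' <= a + b + c)%N.
Proof. lia. Qed.

Lemma hall_main n : forall (D : {set X}) (mu : X -> R) (nu : Y -> R),
  (meas D mu nu < n)%N -> hall_ok D mu nu -> exists pi, hall_sol D mu nu pi.
Proof.
elim: n => [//|n IH] D mu nu Hm Hok.
have Hmn : (meas D mu nu <= n)%N by rewrite -ltnS.
case: (set_0Vmem D) => [D0 | [x0 x0D]].
  exists (fun _ _ => 0); split => //.
  - by move=> x; rewrite D0 inE.
  - by move=> y; rewrite big1 //; case: Hok.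
case: Hok => mu0 nu0 HD.
case: (eqVneq (mu x0) 0) => [m0|mn0].
  have [pi [p0 ps pr pc]] : exists pi, hall_sol (D :\ x0) mu nu pi.
    apply: IH; last first.
      by split => // A sA; apply: HD; apply: subset_trans sA (subD1set D x0).
    apply: leq_trans Hmn; rewrite /meas.
    have h1 := cardsD1 x0 D; rewrite x0D in h1.
    have h2 : (#|[set x in D :\ x0 | mu x != 0%R]| <= #|[set x in D | mu x != 0%R]|)%N.
      by apply: subset_leq_card; apply/subsetP => x; rewrite !inE => /andP[/andP[_ ->] ->].
    lia.
  exists pi; split => //.
    by move=> x y H; apply: ps; apply: contra H => /andP[]; rewrite inE => /andP[_ ->] ->.
  move=> x xD; case: (eqVneq x x0) => [->|nx].
    by rewrite m0 big1 // => y _; apply: ps; rewrite !inE eqxx.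
  by apply: pr; rewrite !inE nx xD.
have mp : 0 < mu x0 by rewrite lt_def mn0 mu0.
case: (pselect (exists A : {set X}, [/\ A \subset D, A != set0, A != D &
          \sum_(x in A) mu x = \sum_(y in NB A) nu y])) => [[A [sAD nA0 nAD tA]] | ntight].
  apply: (@tight_split D mu nu A _ _ sAD nA0 nAD tA); last by split.
  by move=> D' m' n' Hlt Hok'; apply: IH => //; apply: leq_trans Hlt Hmn.
have strict : forall A : {set X}, A \subset D -> A != set0 -> A != D ->
    \sum_(x in A) mu x < \sum_(y in NB A) nu y.
  move=> A sAD nA0 nAD; rewrite lt_def HD // andbT; apply/eqP => E.
  by apply: ntight; exists A; split.
have [y0 /andP[y0N ny0]] : exists y, (y \in NB [set x0]) && (0 < nu y).
  apply: psumr_neq0P; first by move=> y _; exact: nu0.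
  move=> E; have := HD [set x0]; rewrite sub1set x0D big_set1 E => /(_ isT) H; lra.
have rxy0 : r x0 y0.
  by move: y0N; rewrite inE => /existsP[x /andP[]]; rewrite inE => /eqP ->.
pose slack (A : {set X}) := \sum_(y in NB A) nu y - \sum_(x in A) mu x.
pose P := fun A : {set X} => [&& A \subset D :\ x0, A != set0 & y0 \in NB A].
have slack_pos A : P A -> 0 < slack A.
  case/and3P=> sA nA0 _; rewrite /slack subr_gt0; apply: strict => //.
    exact: subset_trans sA (subD1set D x0).
  apply/eqP => AD; move: sA; rewrite AD => /subsetP/(_ x0 x0D); rewrite !inE eqxx //.
have [t [tpos tmu tnu tsl tcase]] : exists t, [/\ 0 < t, t <= mu x0, t <= nu y0,
    forall A, P A -> t <= slack A &
    (t = mu x0 \/ t = nu y0 \/ exists A, P A /\ t = slack A)].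
  pose a := if mu x0 <= nu y0 then mu x0 else nu y0.
  have [apos amu anu acase] : [/\ 0 < a, a <= mu x0, a <= nu y0 & a = mu x0 \/ a = nu y0].
    by rewrite /a; case: (leP (mu x0) (nu y0)) => h; (split; [lra|lra|lra|]); [left|right].
  case: (pselect (exists A, P A)) => [exA | nexA].
    have [As [PAs Amin]] := @exists_min _ P slack exA.
    have sp := slack_pos _ PAs.
    exists (if a <= slack As then a else slack As); case: (leP a (slack As)) => h.
      split => //; last by case: acase; [left | right; left].
      by move=> A PA; apply: le_trans h (Amin _ PA).
    split => //; try lra.
    by right; right; exists As.
  exists a; split => //; last by case: acase; [left | right; left].
  by move=> A PA; case: nexA; exists A.
pose mu' x := if x == x0 then mu x - t else mu x.
pose nu' y := if y == y0 then nu y - t else nu y.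
have mu'0 x : 0 <= mu' x by rewrite /mu'; case: eqP => [->|_] //; rewrite subr_ge0.
have nu'0 y : 0 <= nu' y by rewrite /nu'; case: eqP => [->|_] //; rewrite subr_ge0.
have ok' : hall_ok D mu' nu'.
  split => // A sAD; rewrite /mu' /nu' !sum_shift.
  case: (boolP (x0 \in A)) => x0A.
    have -> : y0 \in NB A by rewrite inE; apply/existsP; exists x0; rewrite x0A rxy0.
    have := HD A sAD; lra.
  case: (boolP (y0 \in NB A)) => y0A.
    have PA : P A.
      rewrite /P y0A andbT; apply/andP; split.
        apply/subsetP => x xA; rewrite !inE (subsetP sAD) // andbT.
        by apply: contraNneq x0A => <-.
      by apply: contraTneq y0A => ->; rewrite NB0 inE.
    have := tsl A PA; rewrite /slack; lra.
  have := HD A sAD; lra.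
have c1 : (#|[set x in D | mu' x != 0%R]| <= #|[set x in D | mu x != 0%R]|)%N.
  apply: subset_leq_card; apply/subsetP => x; rewrite !inE => /andP[-> /=].
  by rewrite /mu'; case: (eqVneq x x0) => [->|_] //; rewrite mn0.
have c2 : (#|[set y | nu' y != 0%R]| <= #|[set y | nu y != 0%R]|)%N.
  apply: subset_leq_card; apply/subsetP => y; rewrite !inE.
  by rewrite /nu'; case: (eqVneq y y0) => [->|_] //; rewrite (gt_eqF ny0).
have [pi [p0 ps pr pc]] : exists pi, hall_sol D mu' nu' pi.
  case: tcase => [E|[E|[As [PAs E]]]].
  - apply: IH => //; apply: leq_trans Hmn; rewrite /meas.
    have c1' : (#|[set x in D | mu' x != 0%R]| < #|[set x in D | mu x != 0%R]|)%N.
      apply: proper_card; rewrite properE; apply/andP; split.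
        apply/subsetP => x; rewrite !inE => /andP[-> /=].
        by rewrite /mu'; case: (eqVneq x x0) => [->|_] //; rewrite mn0.
      apply/subsetPn; exists x0; first by rewrite inE x0D mn0.
      by rewrite inE x0D /mu' eqxx E subrr eqxx.
    exact: lt3a.
  - apply: IH => //; apply: leq_trans Hmn; rewrite /meas.
    have c2' : (#|[set y | nu' y != 0%R]| < #|[set y | nu y != 0%R]|)%N.
      apply: proper_card; rewrite properE; apply/andP; split.
        apply/subsetP => y; rewrite !inE.
        by rewrite /nu'; case: (eqVneq y y0) => [->|_] //; rewrite (gt_eqF ny0).
      apply/subsetPn; exists y0; first by rewrite inE (gt_eqF ny0).
      by rewrite inE /nu' eqxx E subrr eqxx.
    exact: lt3b.
  - case/and3P: PAs => sA nA0 y0A.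
    have sAD : As \subset D by exact: subset_trans sA (subD1set D x0).
    have x0A : x0 \notin As by apply/negP => /(subsetP sA); rewrite !inE eqxx.
    have nAD : As != D by apply: contraNneq x0A => ->.
    apply: (@tight_split D mu' nu' As _ ok' sAD nA0 nAD).
      move=> D' m' n' Hlt Hok'; apply: IH => //; apply: leq_trans Hlt _.
      by apply: leq_trans Hmn; rewrite /meas; exact: le3.
    rewrite /mu' /nu' !sum_shift (negbTE x0A) y0A; rewrite /slack in E; lra.
exists (fun x y => pi x y + (if (x == x0) && (y == y0) then t else 0)); split.
- by move=> x y; rewrite addr_ge0 //; case: ifP => // _; exact: ltW.
- move=> x y H; case: andP => [[/eqP ex /eqP ey]|_]; last by rewrite addr0 ps.
  by move: H; rewrite ex ey x0D rxy0.
- move=> x xD; rewrite big_split /= pr //; case: (eqVneq x x0) => [->|nx].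
    rewrite /= sum_delta /mu' eqxx; lra.
  by rewrite big1 ?addr0 /mu' ?(negbTE nx) // => y _; rewrite (negbTE nx).
- move=> y; rewrite big_split /=; have := pc y; case: (eqVneq y y0) => [->|ny].
    rewrite /nu' eqxx sum_deltab; lra.
  by rewrite sum_deltab /nu' (negbTE ny) addr0.
Qed.

End Hall.
Arguments NB {X Y} r A.
Arguments hall_ok {R X Y} r D mu nu.
Arguments hall_sol {R X Y} r D mu nu pi.
Arguments hall_main {R X Y r n D mu nu}.

Section Coupling.
Variable R : realType.

Lemma sum_unit (F : unit -> R) : \sum_(i : unit) F i = F tt.
Proof. by rewrite (big_pred1 tt) // => [[]]. Qed.

Lemma eps_coupling (X Y : finType) (r : X -> Y -> bool) (mu : X -> R) (nu : Y -> R)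
    (eps : R) :
  0 <= eps -> (forall x, 0 <= mu x) -> (forall y, 0 <= nu y) ->
  \sum_x mu x = 1 -> \sum_y nu y = 1 ->
  (forall A : {set X}, \sum_(x in A) mu x <= \sum_(y in NB r A) nu y + eps) ->
  exists pi : X -> Y -> R,
    [/\ forall x y, 0 <= pi x y, forall x, \sum_y pi x y = mu x,
        forall y, \sum_x pi x y = nu y
      & \sum_x \sum_y (if r x y then 0 else pi x y) <= eps].
Proof.
move=> e0 mu0 nu0 smu snu H.
pose r' x (y' : (Y + unit)%type) := if y' is inl y then r x y else true.
pose nu' (y' : (Y + unit)%type) := if y' is inl y then nu y else eps.
have nu'0 y' : 0 <= nu' y' by case: y'.
have ok : hall_ok r' [set: X] mu nu'.
  split => // A _.
  case: (set_0Vmem A) => [->|[x0 x0A]].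
    by rewrite big_set0; apply: sumr_ge0.
  rewrite [X in _ <= X]big_sumType /=.
  have -> : \sum_(i : unit | inr i \in NB r' A) eps = eps.
    rewrite (big_pred1 tt) // => [[]]; rewrite inE /=.
    by apply/existsP; exists x0; rewrite x0A.
  apply: le_trans (H A) _; rewrite lerD2r le_eqVlt; apply/orP; left; apply/eqP.
  by apply: eq_bigl => y; rewrite !inE.
have [pi' [p0 ps pr pc]] := hall_main (ltnSn _) ok.
pose a x := pi' x (inr tt).
pose b y := nu y - \sum_x pi' x (inl y).
pose c := \sum_x a x.
have a0 x : 0 <= a x by exact: p0.
have b0 y : 0 <= b y by rewrite subr_ge0; exact: (pc (inl y)).
have rowl x : \sum_y pi' x (inl y) = mu x - a x.
  by rewrite -(pr x (in_setT x)) big_sumType /= sum_unit addrK.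
have sb : \sum_y b y = c.
  rewrite /b sumrB snu exchange_big /=.
  under eq_bigr do rewrite rowl.
  by rewrite sumrB smu /c; ring.
have ce : c <= eps by have := pc (inr tt); rewrite /c /a.
have c0 : 0 <= c by apply: sumr_ge0.
exists (fun x y => pi' x (inl y) + a x * b y / c); split.
- move=> x y; apply: addr_ge0 => //; apply: divr_ge0 => //; exact: mulr_ge0.
- move=> x; rewrite big_split /= rowl -mulr_suml -mulr_sumr sb.
  case: (eqVneq c 0) => [c00|cn0].
    have := psumr_eq0P (fun i _ => a0 i) c00 => /(_ x isT) ->; ring.
  by rewrite mulrK ?unitfE // subrK.
- move=> y; rewrite big_split /= -mulr_suml -mulr_suml -/c.
  rewrite mulrAC.
  case: (eqVneq c 0) => [c00|cn0].
    have := psumr_eq0P (fun i _ => b0 i) (etrans sb c00) => /(_ y isT).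
    rewrite /b => /eqP; rewrite subr_eq0 => /eqP <-; rewrite c00; ring.
  by rewrite divff // mul1r /b addrC subrK.
- apply: le_trans ce; apply: le_trans (_ : \sum_x \sum_y (a x * b y / c) <= _).
    apply: ler_sum => x _; apply: ler_sum => y _.
    case: ifP => rxy.
      by apply: divr_ge0 => //; exact: mulr_ge0.
    by rewrite ps ?add0r //= rxy andbF.
  under eq_bigr do rewrite -mulr_suml -mulr_sumr sb.
  rewrite -!mulr_suml -/c.
  case: (eqVneq c 0) => [->|cn0]; first by rewrite !mul0r.
  by rewrite mulrK ?unitfE.
Qed.

End Coupling.

Section Main.
Variables (R : realType) (AP : Type).

Lemma Pset_inl (S1 S2 : finType) (M1 : ctmc R AP S1) (M2 : ctmc R AP S2) s A :
  Pset (sumP M1 M2) (inl s) A = \sum_t (if inl t \in A then ctP M1 s t else 0).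
Proof.
rewrite /Pset big_mkcond big_sumType /= [X in _ + X]big1 ?addr0 // => t _.
by case: ifP.
Qed.

Lemma Pset_inr (S1 S2 : finType) (M1 : ctmc R AP S1) (M2 : ctmc R AP S2) s A :
  Pset (sumP M1 M2) (inr s) A = \sum_t (if inr t \in A then ctP M2 s t else 0).
Proof.
rewrite /Pset big_mkcond big_sumType /= [X in X + _]big1 ?add0r // => t _.
by case: ifP.
Qed.

Lemma sumP_ge0 (S1 S2 : finType) (M1 : ctmc R AP S1) (M2 : ctmc R AP S2) x y :
  0 <= sumP M1 M2 x y.
Proof. by case: x; case: y => * //=; apply: ctP_ge0. Qed.

Lemma Pset_refl (T : finType) (P : T -> T -> R) (Rl : rel T) (eps : R) s A :
  (forall s t, 0 <= P s t) -> reflexive Rl -> 0 <= eps ->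
  Pset P s A <= Pset P s (rel_image Rl A) + eps.
Proof.
move=> P0 Rr e0; have : Pset P s A <= Pset P s (rel_image Rl A).
  apply: ler_sum_sub => // t tA; rewrite inE; apply/existsP; exists t.
  by rewrite tA Rr.
lra.
Qed.

Lemma sum_pair (A B : finType) (F : (A * B)%type -> R) :
  \sum_q F q = \sum_a \sum_b F (a, b).
Proof. by rewrite pair_big; apply: eq_big => // -[a b]. Qed.

Lemma sum_eq1 (T : finType) (c : T) (f : T -> R) :
  \sum_y (if c == y then f y else 0) = f c.
Proof.
rewrite -big_mkcond /= (big_pred1 c) // => y; by rewrite eq_sym.
Qed.

End Main.

Theorem theorem3 (R : realType) (AP : Type) (SM SN : finType)
    (eps delta : R) (M : ctmc R AP SM) (N : ctmc R AP SN) :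
  0 <= eps -> 0 <= delta ->
  ed_bisimilar eps delta M N ->
  exists (S' : finType) (M' N' : ctmc R AP S'),
    [/\ same_graph M' N',
        ed_bisimilar eps 0 M M',
        ed_bisimilar 0 delta M' N'
      & strong_bisimilar N' N].
Proof.
move=> e0 d0 [Rl [[Rrefl [Rsym Rcond]] Rinit]].
pose Rc m n := Rl (inl m) (inr n).
have Hc : forall mn : (SM * SN)%type, exists pi : SM -> SN -> R,
    [/\ forall x y, 0 <= pi x y, forall x, \sum_y pi x y = ctP M mn.1 x,
        forall y, \sum_x pi x y = ctP N mn.2 y
      & Rc mn.1 mn.2 -> \sum_x \sum_y (if Rc x y then 0 else pi x y) <= eps].
  case=> m n /=; case: (boolP (Rc m n)) => hmn.
    have [_ _ HP] := Rcond _ _ hmn.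
    have [|pi [h1 h2 h3 h4]] := @eps_coupling R SM SN Rc (ctP M m) (ctP N n) eps e0
       (ctP_ge0 M m) (ctP_ge0 N n) (ctP_sum1 M m) (ctP_sum1 N n).
      move=> A; pose A' : {set (SM + SN)%type} := [set z | if z is inl x then x \in A else false].
      have := HP A'.
      rewrite Pset_inl Pset_inr.
      have -> : \sum_t (if inl t \in A' then ctP M m t else 0) = \sum_(x in A) ctP M m x.
        by rewrite (big_mkcond (fun x => x \in A)); apply: eq_bigr => x _; rewrite inE.
      have -> : \sum_t (if inr t \in rel_image Rl A' then ctP N n t else 0) =
                \sum_(y in NB Rc A) ctP N n y.
        rewrite (big_mkcond (fun y => y \in NB Rc A)); apply: eq_bigr => y _; rewrite !inE.
        congr (if _ then _ else _); apply/existsP/existsP.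
          by case=> -[x|x]; rewrite inE //= => /andP[xA h]; exists x; rewrite xA.
        by case=> x /andP[xA h]; exists (inl x); rewrite inE xA.
      by [].
    by exists pi; split.
  exists (fun x y => ctP M m x * ctP N n y); split.
  - by move=> x y; rewrite mulr_ge0 // ctP_ge0.
  - by move=> x; rewrite -mulr_sumr ctP_sum1 mulr1.
  - by move=> y; rewrite -mulr_suml ctP_sum1 mul1r.
  - by case.
have [pif Hpif] := choice Hc.
pose PP (p q : (SM * SN)%type) := pif p q.1 q.2.
have PP0 p q : 0 <= PP p q by have [h _ _ _] := Hpif p; exact: h.
have PP1 p : \sum_q PP p q = 1.
  have [_ hr _ _] := Hpif p.
  rewrite /PP sum_pair /= -(ctP_sum1 M p.1); apply: eq_bigr => x _; exact: hr.
pose EN' (p : (SM * SN)%type) := ctE N p.2.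
pose EM' (p : (SM * SN)%type) := if Rc p.1 p.2 then ctE M p.1 else ctE N p.2.
pose L' (p : (SM * SN)%type) := ctL N p.2.
have EN'0 p : 0 < EN' p by exact: ctE_gt0.
have EM'0 p : 0 < EM' p by rewrite /EM'; case: ifP => _; exact: ctE_gt0.
exists (SM * SN)%type.
exists (@Ctmc R AP _ PP EM' (ctinit M, ctinit N) L' PP0 PP1 EM'0).
exists (@Ctmc R AP _ PP EN' (ctinit M, ctinit N) L' PP0 PP1 EN'0).
split.
- by split.
- pose Rl4 (x y : (SM + (SM * SN))%type) : bool :=
    match x, y with
    | inl m, inl m' => m == m'
    | inr p, inr p' => p == p'
    | inl m, inr p => (p.1 == m) && Rc m p.2
    | inr p, inl m => (p.1 == m) && Rc m p.2
    end.
  have R4refl : reflexive Rl4 by case=> x /=; rewrite eqxx.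
  exists Rl4; split; last by rewrite /= eqxx; exact: Rinit.
  split => //.
  split; first by case=> [x|x] [y|y] //=; rewrite eq_sym.
  move=> [m|p] [m'|p'] /=.
  + move/eqP <-; split => //; first by rewrite subrr normr0.
    by move=> A; apply: Pset_refl => //; exact: sumP_ge0.
  + case: p' => m1 n1 /= /andP[/eqP -> hR].
    have [hL _ _] := Rcond _ _ hR.
    have [_ hr _ hoff] := Hpif (m, n1); have hoff' := hoff hR.
    have hr' : forall x, ctP M m x = \sum_y pif (m, n1) x y by move=> x; rewrite hr.
    split; first exact: hL.
      by rewrite /= /EM' /= hR subrr normr0.
    move=> A; rewrite Pset_inl Pset_inr /= sum_pair.
    apply: le_trans (lerD (lexx _) hoff'); rewrite -big_split; apply: ler_sum => x _.
    rewrite -big_split /=; case: ifP => hx.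
      rewrite hr'; apply: ler_sum => y _; rewrite /PP /=.
      case: (boolP (Rc x y)) => hxy /=.
        rewrite ifT ?addr0 //; rewrite inE; apply/existsP; exists (inl x).
        by rewrite hx /= eqxx hxy.
      have := PP0 (m, n1) (x, y); rewrite /PP /= => h0; case: ifP => _; lra.
    apply: sumr_ge0 => y _; apply: addr_ge0; case: ifP => // _; exact: (PP0 (m, n1) (x, y)).
  + case: p => m1 n1 /= /andP[/eqP -> hR].
    have [hL _ _] := Rcond _ _ hR.
    have [_ hr _ hoff] := Hpif (m', n1); have hoff' := hoff hR.
    have hr' : forall x, ctP M m' x = \sum_y pif (m', n1) x y by move=> x; rewrite hr.
    split; first exact: (esym hL).
      by rewrite /= /EM' /= hR subrr normr0.
    move=> A; rewrite Pset_inr Pset_inl /= sum_pair.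
    apply: le_trans (lerD (lexx _) hoff'); rewrite -big_split; apply: ler_sum => x _.
    case: ifP => hx.
      rewrite hr' -big_split; apply: ler_sum => y _; rewrite /PP /=.
      have := PP0 (m', n1) (x, y); rewrite /PP /= => h0.
      by case: ifP => _; case: ifP => _; lra.
    rewrite /= add0r; apply: ler_sum => y _; rewrite /PP /=.
    case: ifP => hA; last by case: ifP => // _; exact: (PP0 (m', n1) (x, y)).
    case: (boolP (Rc x y)) => hxy //=.
    have : inl x \in rel_image Rl4 A.
      by rewrite inE; apply/existsP; exists (inr (x, y)); rewrite hA /= eqxx hxy.
    by rewrite hx.
  + move/eqP <-; split => //; first by rewrite subrr normr0.
    by move=> A; apply: Pset_refl => //; exact: sumP_ge0.
- have hE : forall p, `|ln (EM' p) - ln (EN' p)| <= delta.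
    move=> [m n]; rewrite /EM' /EN' /=; case: ifP => h.
      by have [_ hd _] := Rcond _ _ h.
    by rewrite subrr normr0.
  pose st (x : ((SM * SN) + (SM * SN))%type) := match x with inl p => p | inr p => p end.
  exists (fun x y => st x == st y); split; last by rewrite /= eqxx.
  split; first by move=> x; exact: eqxx.
  split; first by move=> x y; exact: eq_sym.
  move=> s s' /eqP e; split.
  + by case: s e; case: s' => p q /= ->.
  + case: s e; case: s' => p q /= ->; rewrite ?subrr ?normr0 //.
    by rewrite distrC.
  + move=> A; rewrite addr0.
    case: s e; case: s' => p q /= ->; rewrite ?Pset_inl ?Pset_inr /=;
      apply: ler_sum => t _; (case: ifP => h; last by case: ifP);
      (rewrite ifT //; rewrite inE; apply/existsP; eexists; apply/andP; split; [exact: h | by rewrite /= eqxx]).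
- pose k (x : ((SM * SN) + SN)%type) := match x with inl p => p.2 | inr n => n end.
  exists (fun x y => k x == k y); split; last by rewrite /= eqxx.
  split.
    move=> x y z; split; first exact: eqxx.
    by move/eqP => e; rewrite e.
  have key : forall x, [/\ sumL (@Ctmc R AP _ PP EN' (ctinit M, ctinit N) L' PP0 PP1 EN'0) N x = ctL N (k x),
      sumE (@Ctmc R AP _ PP EN' (ctinit M, ctinit N) L' PP0 PP1 EN'0) N x = ctE N (k x)
    & forall u, Pset (sumP (@Ctmc R AP _ PP EN' (ctinit M, ctinit N) L' PP0 PP1 EN'0) N) x
         [set t | k u == k t] = ctP N (k x) (k u)].
    case=> [p|n]; split => // u.
      rewrite Pset_inl /= sum_pair /=.
      have [_ _ hc _] := Hpif p; rewrite -hc; apply: eq_bigr => x _.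
      by rewrite -[RHS](@sum_eq1 R _ (k u) (fun y => PP p (x, y))); apply: eq_bigr => y _; rewrite inE.
    rewrite Pset_inr /= -[RHS](@sum_eq1 R _ (k u) (fun y => ctP N n y)).
    by apply: eq_bigr => y _; rewrite inE.
  move=> s s' /eqP e; have [k1 k2 k3] := key s; have [k1' k2' k3'] := key s'.
  by split => [|| u]; rewrite ?k1 ?k1' ?k2 ?k2' ?k3 ?k3' e.
Qed.
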